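(* On the square graph with vertices $0,1,2,3$ (in cyclic order) over $\mathbb{F}_2$ with exterior algebra $\Omega(\mathbb{Z}_2\times\mathbb{Z}_2)$, the unique quantum metric $g=e^1\otimes e^1+e^2\otimes e^2$ has exactly four QLCs, all flat. Two have constant coefficients: for $\alpha\in\{0,1\}$, $\nabla e^1=\nabla e^2=\alpha\,\theta\otimes\theta$ with $\sigma(e^1\otimes e^1)=\alpha e^2\otimes e^2+(1+\alpha)e^1\otimes e^1$, $\sigma(e^2\otimes e^2)=(1+\alpha)e^2\otimes e^2+\alpha e^1\otimes e^1$, $\sigma(e^1\otimes e^2)=(1+\alpha)e^2\otimes e^1+\alpha e^1\otimes e^2$, $\sigma(e^2\otimes e^1)=(1+\alpha)e^1\otimes e^2+\alpha e^2\otimes e^1$. The other two are $\nabla e^1=\theta\otimes\theta+\gamma e^1\otimes e^1$, $\nabla e^2=\theta\otimes\theta+(1+\gamma)e^2\otimes e^2$ with $\sigma(e^1\otimes e^1)=\gamma e^1\otimes e^1+e^2\otimes e^2$, $\sigma(e^1\otimes e^2)=e^1\otimes e^2$, $\sigma(e^2\otimes e^2)=e^1\otimes e^1+(1+\gamma)e^2\otimes e^2$, $\sigma(e^2\otimes e^1)=e^2\otimes e^1$, where $\gamma\in A$ is a function alternating between $0$ and $1$ around the square, i.e. $\gamma(0)=\gamma(2)$ and $\gamma(1)=\gamma(3)=1+\gamma(0)$.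
   Context: $A=\mathbb{F}_2(X)$, $X=\{0,1,2,3\}$ identified with $\mathbb{Z}_2\times\mathbb{Z}_2$ via $0=(0,0),1=(0,1),2=(1,1),3=(1,0)$; $R_1$, $R_2$ are the shifts $(R_1f)(x)=f(x+(1,0))$, $(R_2f)(x)=f(x+(0,1))$. The square graph has arrows $i\to i\pm1$ mod 4, and the calculus has basis over $A$ given by $e^1=03+30+12+21$, $e^2=01+10+32+23$ (here $ij$ denotes the arrow $i\to j$), with $e^if=(R_if)e^i$ and ${\rm d} f=\sum_i(R_if+f)e^i$; $\theta=e^1+e^2$; $\Omega^1\otimes_A\Omega^1$ is free with basis $e^i\otimes e^j$. $\Omega(\mathbb{Z}_2\times\mathbb{Z}_2)$ is the exterior algebra generated by $A$ and $e^1,e^2$ with relations $(e^1)^2=(e^2)^2=0$, $e^1\wedge e^2+e^2\wedge e^1=0$, ${\rm d} e^i=0$. A bimodule connection is a linear $\nabla:\Omega^1\to\Omega^1\otimes_A\Omega^1$ with $\nabla(f\omega)={\rm d} f\otimes\omega+f\nabla\omega$ and $\nabla(\omega f)=(\nabla\omega)f+\sigma(\omega\otimes{\rm d} f)$ for a bimodule map $\sigma$; it is a QLC if $T_\nabla=\wedge\nabla-{\rm d}=0$ and $(\nabla\otimes\mathrm{id}+(\sigma\otimes\mathrm{id})(\mathrm{id}\otimes\nabla))g=0$. Flat means $R_\nabla=({\rm d}\otimes\mathrm{id}-(\wedge\otimes\mathrm{id})(\mathrm{id}\otimes\nabla))\nabla=0$. *)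

(* Defs.v *)
(* Concrete coordinate model of the calculus on the square
   graph = Cayley graph of Z2 x Z2 over F_2.  Index 'i1' stands for e^1,
   'i2' for e^2. *)
From mathcomp Require Import all_boot all_algebra.
Set Implicit Arguments. Unset Strict Implicit. Unset Printing Implicit Defensive.
Import GRing.Theory.
Local Open Scope ring_scope.

Definition F := 'F_2.
Definition X := ('F_2 * 'F_2)%type.
Definition A := X -> F.

Definition i1 : 'I_2 := @Ordinal 2 0 isT.
Definition i2 : 'I_2 := @Ordinal 2 1 isT.

Definition p0 : X := (0, 0).
Definition p1 : X := (0, 1).
Definition p2 : X := (1, 1).
Definition p3 : X := (1, 0).

Definition shiftv (i : 'I_2) : X := if i == i1 then (1, 0) else (0, 1).
Definition R (i : 'I_2) (f : A) : A := fun x => f (x + shiftv i).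
Definition cst (c : F) : A := fun _ => c.

(* Omega^1 : free left A-module on e^1,e^2 ; w = sum_i (w i) e^i *)
Definition Om1 := 'I_2 -> A.
(* Omega^1 (x)_A Omega^1 : free on e^i (x) e^j *)
Definition Om2 := 'I_2 -> 'I_2 -> A.
Definition Om3 := 'I_2 -> 'I_2 -> 'I_2 -> A.
(* Omega^2 is free of rank one on e^1 /\ e^2 : we store the coefficient (type A).
   Omega^2 (x)_A Omega^1 is free on (e^1/\e^2) (x) e^k : type 'I_2 -> A. *)
Definition Om2x1 := 'I_2 -> A.

Definition add1 (w w' : Om1) : Om1 := fun i x => w i x + w' i x.
Definition lmul1 (f : A) (w : Om1) : Om1 := fun i x => f x * w i x.
(* e^i f = (R_i f) e^i *)
Definition rmul1 (w : Om1) (f : A) : Om1 := fun i x => w i x * R i f x.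
Definition add2 (T T' : Om2) : Om2 := fun i j x => T i j x + T' i j x.
Definition lmul2 (f : A) (T : Om2) : Om2 := fun i j x => f x * T i j x.
Definition rmul2 (T : Om2) (f : A) : Om2 := fun i j x => T i j x * R i (R j f) x.

Definition dA (f : A) : Om1 := fun i x => R i f x + f x.
Definition e (k : 'I_2) : Om1 := fun i _ => (i == k)%:R.

Definition tens11 (w v : Om1) : Om2 := fun i j x => w i x * R i (v j) x.
Definition tens21 (T : Om2) (w : Om1) : Om3 :=
  fun i j k x => T i j x * R i (R j (w k)) x.
Definition tens12 (w : Om1) (T : Om2) : Om3 :=
  fun i j k x => w i x * R i (T j k) x.
Definition tens_form1 (rho : A) (w : Om1) : Om2x1 :=
  fun k x => rho x * R i1 (R i2 (w k)) x.

(* wedge : Omega^1 (x) Omega^1 -> Omega^2, using e^i/\e^i = 0 and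
   e^2/\e^1 = - e^1/\e^2 *)
Definition wedge2 (T : Om2) : A := fun x => T i1 i2 x - T i2 i1 x.
Definition wedge21 (Y : Om3) : Om2x1 := fun k x => Y i1 i2 k x - Y i2 i1 k x.
(* exterior derivative on 1-forms: d(sum_i a_i e^i) = sum_i d a_i /\ e^i
   (since d e^i = 0) *)
Definition d1 (w : Om1) : A :=
  fun x => \sum_(i < 2) wedge2 (tens11 (dA (w i)) (e i)) x.

(* column decomposition: T = sum_b (col T b) (x) e^b *)
Definition col (T : Om2) (b : 'I_2) : Om1 := fun i => T i b.

Definition sigma3 (sigma : Om2 -> Om2) (Y : Om3) : Om3 :=
  fun i j k => sigma (fun a c => Y a c k) i j.

Definition is_bimod_conn (nabla : Om1 -> Om2) (sigma : Om2 -> Om2) : Prop :=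
  (forall w w', nabla (add1 w w') = add2 (nabla w) (nabla w')) /\
  (forall f w, nabla (lmul1 f w) = add2 (tens11 (dA f) w) (lmul2 f (nabla w))) /\
  (forall f w, nabla (rmul1 w f) = add2 (rmul2 (nabla w) f) (sigma (tens11 w (dA f)))) /\
  (forall T T', sigma (add2 T T') = add2 (sigma T) (sigma T')) /\
  (forall f T, sigma (lmul2 f T) = lmul2 f (sigma T)) /\
  (forall f T, sigma (rmul2 T f) = rmul2 (sigma T) f).

Definition torsion_free (nabla : Om1 -> Om2) : Prop :=
  forall w, wedge2 (nabla w) = d1 w.

(* (nabla (x) id + (sigma (x) id)(id (x) nabla)) g = 0, with
   g = sum_b (col g b) (x) e^b *)
Definition metric_compat (nabla : Om1 -> Om2) (sigma : Om2 -> Om2) (g : Om2) : Prop :=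
  forall i j k x,
    \sum_(b < 2) (tens21 (nabla (col g b)) (e b) i j k x
                  + sigma3 sigma (tens12 (col g b) (nabla (e b))) i j k x) = 0.

Definition QLC (nabla : Om1 -> Om2) (sigma : Om2 -> Om2) (g : Om2) : Prop :=
  torsion_free nabla /\ metric_compat nabla sigma g.

(* R_nabla = (d (x) id - (/\ (x) id)(id (x) nabla)) nabla, with
   nabla w = sum_b (col (nabla w) b) (x) e^b *)
Definition curvature (nabla : Om1 -> Om2) (w : Om1) : Om2x1 :=
  fun k x => \sum_(b < 2)
    (tens_form1 (d1 (col (nabla w) b)) (e b) k x
     - wedge21 (tens12 (col (nabla w) b) (nabla (e b))) k x).

Definition flat (nabla : Om1 -> Om2) : Prop :=
  forall w k x, curvature nabla w k x = 0.

Definition gmet : Om2 := fun i j _ => (i == j)%:R.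

(* left connection determined by the values N b = nabla e^b *)
Definition mk_nabla (N : 'I_2 -> Om2) : Om1 -> Om2 :=
  fun w i j x => \sum_(b < 2) (tens11 (dA (w b)) (e b) i j x + w b x * N b i j x).
(* left-linear map determined by S a b = sigma (e^a (x) e^b) *)
Definition mk_sigma (S : 'I_2 -> 'I_2 -> Om2) : Om2 -> Om2 :=
  fun T i j x => \sum_(a < 2) \sum_(b < 2) T a b x * S a b i j x.

(* basis tensors e^a (x) e^b and theta (x) theta, theta = e^1 + e^2 *)
Definition E (a b : 'I_2) : Om2 := fun i j _ => ((i == a) && (j == b))%:R.
Definition thth : Om2 := fun _ _ _ => 1.
Definition comb2 (c1 : A) (T1 : Om2) (c2 : A) (T2 : Om2) : Om2 :=
  fun i j x => c1 x * T1 i j x + c2 x * T2 i j x.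

Definition Nc (alpha : F) (b : 'I_2) : Om2 := fun i j x => alpha * thth i j x.
Definition Sc (alpha : F) (a b : 'I_2) : Om2 :=
  if a == i1 then
    (if b == i1 then comb2 (cst alpha) (E i2 i2) (cst (1 + alpha)) (E i1 i1)
     else comb2 (cst (1 + alpha)) (E i2 i1) (cst alpha) (E i1 i2))
  else
    (if b == i2 then comb2 (cst (1 + alpha)) (E i2 i2) (cst alpha) (E i1 i1)
     else comb2 (cst (1 + alpha)) (E i1 i2) (cst alpha) (E i2 i1)).

Definition Ng (gamma : A) (b : 'I_2) : Om2 :=
  if b == i1 then fun i j x => thth i j x + gamma x * E i1 i1 i j x
  else fun i j x => thth i j x + (1 + gamma x) * E i2 i2 i j x.
Definition Sg (gamma : A) (a b : 'I_2) : Om2 :=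
  if a == i1 then
    (if b == i1 then comb2 gamma (E i1 i1) (cst 1) (E i2 i2) else E i1 i2)
  else
    (if b == i2 then comb2 (cst 1) (E i1 i1) (fun x => 1 + gamma x) (E i2 i2)
     else E i2 i1).

Definition alternating (gamma : A) : Prop :=
  [/\ gamma p0 = gamma p2, gamma p1 = 1 + gamma p0 & gamma p3 = 1 + gamma p0].

(* Main.v *)
Require Import Defs.
From mathcomp Require Import all_boot all_algebra.
From mathcomp Require Import ring.
From Stdlib Require Import FunctionalExtensionality.
Set Implicit Arguments. Unset Strict Implicit. Unset Printing Implicit Defensive.
Import GRing.Theory.
Local Open Scope ring_scope.

Arguments R : simpl never.
Arguments p0 : simpl never.
Arguments p1 : simpl never.
Arguments p2 : simpl never.
Arguments p3 : simpl never.

Lemma two0 : (1 + 1 : F) = 0. Proof. by apply/eqP. Qed.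
Lemma F2_cases (v : F) : v = 0 \/ v = 1.
Proof. case: v => [[|[|n]]] // H; [left|right]; by apply/val_inj. Qed.
Lemma ord2 (i : 'I_2) : i = i1 \/ i = i2.
Proof. case: i => [[|[|n]]] // H; [left|right]; by apply/val_inj. Qed.
Lemma ptcases (x : X) : x = p0 \/ x = p1 \/ x = p2 \/ x = p3.
Proof.
case: x => a b; case: (F2_cases a) => ->; case: (F2_cases b) => ->; rewrite /p0/p1/p2/p3; tauto.
Qed.
Lemma sum2 (G : 'I_2 -> F) : \sum_(b < 2) G b = G i1 + G i2.
Proof. rewrite big_ord_recl big_ord1. congr (_ + _); congr G; exact/val_inj. Qed.
Lemma R10 f : R i1 f p0 = f p3. Proof. rewrite /R; congr f; exact/eqP. Qed.
Lemma R11 f : R i1 f p1 = f p2. Proof. rewrite /R; congr f; exact/eqP. Qed.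
Lemma R12 f : R i1 f p2 = f p1. Proof. rewrite /R; congr f; exact/eqP. Qed.
Lemma R13 f : R i1 f p3 = f p0. Proof. rewrite /R; congr f; exact/eqP. Qed.
Lemma R20 f : R i2 f p0 = f p1. Proof. rewrite /R; congr f; exact/eqP. Qed.
Lemma R21 f : R i2 f p1 = f p0. Proof. rewrite /R; congr f; exact/eqP. Qed.
Lemma R22 f : R i2 f p2 = f p3. Proof. rewrite /R; congr f; exact/eqP. Qed.
Lemma R23 f : R i2 f p3 = f p2. Proof. rewrite /R; congr f; exact/eqP. Qed.
Lemma e12 : (i1 == i2) = false. Proof. by []. Qed.
Lemma e21 : (i2 == i1) = false. Proof. by []. Qed.
Lemma q01 : (p0 == p1) = false. Proof. by []. Qed.
Lemma q02 : (p0 == p2) = false. Proof. by []. Qed.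
Lemma q03 : (p0 == p3) = false. Proof. by []. Qed.
Lemma q10 : (p1 == p0) = false. Proof. by []. Qed.
Lemma q12 : (p1 == p2) = false. Proof. by []. Qed.
Lemma q13 : (p1 == p3) = false. Proof. by []. Qed.
Lemma q20 : (p2 == p0) = false. Proof. by []. Qed.
Lemma q21 : (p2 == p1) = false. Proof. by []. Qed.
Lemma q23 : (p2 == p3) = false. Proof. by []. Qed.
Lemma q30 : (p3 == p0) = false. Proof. by []. Qed.
Lemma q31 : (p3 == p1) = false. Proof. by []. Qed.
Lemma q32 : (p3 == p2) = false. Proof. by []. Qed.
Lemma tR : (true%:R : F) = 1. Proof. by []. Qed.
Lemma fR : (false%:R : F) = 0. Proof. by []. Qed.

Lemma dblF (x : F) : x + x = 0.
Proof. by rewrite -{1 2}[x]mul1r -mulrDl two0 mul0r. Qed.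
Lemma oppF (x : F) : - x = x.
Proof. by apply/eqP; rewrite -subr_eq0 -opprD dblF oppr0. Qed.
Lemma use_eq (s t l r : F) : l = r -> @eq F (s + (l + r)) t -> s = t.
Proof. by move=> ->; rewrite dblF addr0. Qed.

(* reflexive normaliser for polynomial identities over F = F_2 *)
Inductive pe : Type := PVar of nat | P0 | P1 | PAdd of pe & pe | PMul of pe & pe | POpp of pe.
Fixpoint peval (env : seq F) (t : pe) : F :=
  match t with
  | PVar n => nth 0 env n | P0 => 0 | P1 => 1
  | PAdd a b => peval env a + peval env b
  | PMul a b => peval env a * peval env b
  | POpp a => - peval env a end.
Fixpoint evM (env : seq F) (m : seq nat) : F :=
  match m with [::] => 1 | v :: m' => nth 0 env v * evM env m' end.
Fixpoint evP (env : seq F) (p : seq (seq nat)) : F :=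
  match p with [::] => 0 | m :: p' => evM env m + evP env p' end.
Fixpoint munion (m : seq nat) : seq nat -> seq nat :=
  match m with
  | [::] => fun n => n
  | a :: m' => fix mu2 (n : seq nat) : seq nat :=
      match n with
      | [::] => a :: m'
      | b :: n' => if (a < b)%N then a :: munion m' n
                   else if (b < a)%N then b :: mu2 n'
                   else a :: munion m' n'
      end
  end.
Fixpoint mlt (m n : seq nat) : bool :=
  match m, n with
  | [::], [::] => false | [::], _ => true | _, [::] => false
  | a :: m', b :: n' => (a < b)%N || ((a == b) && mlt m' n') end.
Fixpoint padd (p : seq (seq nat)) : seq (seq nat) -> seq (seq nat) :=
  match p with
  | [::] => fun q => q
  | m :: p' => fix pa2 (q : seq (seq nat)) : seq (seq nat) :=
      match q with
      | [::] => m :: p'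
      | n :: q' => if m == n then padd p' q'
                   else if mlt m n then m :: padd p' q
                   else n :: pa2 q'
      end
  end.
Definition pmul (p q : seq (seq nat)) : seq (seq nat) :=
  foldr (fun m acc => foldr (fun n acc' => padd [:: munion m n] acc') acc q) [::] p.
Fixpoint pnorm (t : pe) : seq (seq nat) :=
  match t with
  | PVar n => [:: [:: n]] | P0 => [::] | P1 => [:: [::]]
  | PAdd a b => padd (pnorm a) (pnorm b)
  | PMul a b => pmul (pnorm a) (pnorm b)
  | POpp a => pnorm a end.

Lemma idemF (v : F) : v * v = v.
Proof. by case: (F2_cases v) => ->; rewrite ?mul0r ?mul1r. Qed.

Lemma evM_union env m n : evM env (munion m n) = evM env m * evM env n.
Proof.
elim: m n => [|a m IH] n /=; first by rewrite mul1r.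
elim: n => [|b n IHn] /=; first by rewrite mulr1.
case: ltnP => Hab /=; first by rewrite IH /= mulrA.
case: ltnP => Hba /=; first by rewrite IHn /=; ring.
have -> : b = a by apply/eqP; rewrite eqn_leq Hab Hba.
rewrite IH -{1}[nth 0 env a]idemF; ring.
Qed.

Lemma evP_add env p q : evP env (padd p q) = evP env p + evP env q.
Proof.
elim: p q => [|m p IH] q /=; first by rewrite add0r.
elim: q => [|n q IHq] /=; first by rewrite addr0.
case: eqP => [<-|_]; first by rewrite IH addrACA dblF add0r.
case: ifP => _ /=; first by rewrite IH /= addrA.
by rewrite IHq /=; ring.
Qed.

Lemma evP_inner env m q acc : evP env (foldr (fun n acc' => padd [:: munion m n] acc') acc q)
   = evM env m * evP env q + evP env acc.
Proof.
elim: q => [|n q IHq]; first by rewrite /= mulr0 add0r.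
change (evP env (padd [:: munion m n] (foldr (fun n acc' => padd [:: munion m n] acc') acc q)) =
  evM env m * (evM env n + evP env q) + evP env acc).
by rewrite evP_add IHq /= addr0 evM_union mulrDr addrA.
Qed.
Lemma evP_mul env p q : evP env (pmul p q) = evP env p * evP env q.
Proof.
rewrite /pmul; elim: p => [|m p IH] /=; first by rewrite mul0r.
by rewrite evP_inner IH mulrDl.
Qed.

Lemma pnorm_ok env t : peval env t = evP env (pnorm t).
Proof.
elim: t => [n||| a IHa b IHb | a IHa b IHb | a IHa] /=.
- by rewrite mulr1 addr0.
- by [].
- by rewrite addr0.
- by rewrite evP_add IHa IHb.
- by rewrite evP_mul IHa IHb.
- by rewrite oppF IHa.
Qed.

Lemma f2_sound env a b : pnorm a == pnorm b -> peval env a = peval env b.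
Proof. by move/eqP=> H; rewrite !pnorm_ok H. Qed.

Ltac isin t l := lazymatch l with
  | nil => constr:(false)
  | cons t _ => constr:(true)
  | cons _ ?l' => isin t l' end.
Ltac collect t l := lazymatch t with
  | @Algebra.add _ ?a ?b => let l1 := collect a l in collect b l1
  | @GRing.mul _ ?a ?b => let l1 := collect a l in collect b l1
  | @Algebra.opp _ ?a => collect a l
  | @Algebra.zero _ => l
  | GRing.one _ => l
  | _ => let b := isin t l in lazymatch b with true => l | false => constr:(@cons F t l) end
  end.
Ltac idx t l := lazymatch l with
  | cons t _ => constr:(0%N)
  | cons _ ?l' => let n := idx t l' in constr:(S n) end.
Ltac reif t l := lazymatch t with
  | @Algebra.add _ ?a ?b => let x := reif a l in let y := reif b l in constr:(PAdd x y)
  | @GRing.mul _ ?a ?b => let x := reif a l in let y := reif b l in constr:(PMul x y)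
  | @Algebra.opp _ ?a => let x := reif a l in constr:(POpp x)
  | @Algebra.zero _ => constr:(P0)
  | GRing.one _ => constr:(P1)
  | _ => let n := idx t l in constr:(PVar n)
  end.
Ltac f2ring := rewrite ?tR ?fR;
  lazymatch goal with |- ?a = ?b =>
    let l := collect a (@nil F) in let l := collect b l in
    let x := reif a l in let y := reif b l in
    change (peval l x = peval l y); apply: (@f2_sound l x y); vm_compute; reflexivity
  end.


Definition Sof (N : 'I_2 -> Om2) (a b : 'I_2) : Om2 := fun i j x =>
  if a == b then ((i == a) && (j == a))%:R + (i == j)%:R * N a i j x
  else ((j == a) && (i != a))%:R + (i != j)%:R * N a i j x.
Definition dl (y : X) : A := fun z => (z == y)%:R.
Definition opp (x : X) : X := x + shiftv i1 + shiftv i2.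
Lemma opp0 : opp p0 = p2. Proof. exact/eqP. Qed.
Lemma opp1 : opp p1 = p3. Proof. exact/eqP. Qed.
Lemma opp2 : opp p2 = p0. Proof. exact/eqP. Qed.
Lemma opp3 : opp p3 = p1. Proof. exact/eqP. Qed.
Definition gam (c : F) : A := fun x => if (x == p0) || (x == p2) then c else 1 + c.

Ltac unf1 := unfold mk_nabla, mk_sigma, tens11, tens21, tens12, dA, e, E, add1, add2,
  lmul1, lmul2, rmul1, rmul2, Defs.col, sigma3, wedge2, wedge21, d1, tens_form1, thth,
  comb2, cst, gmet, Nc, Sc, Ng, Sg, curvature, Sof, dl, gam; cbv beta.
Ltac unf := do 4 unf1.
Ltac evq1 := rewrite ?eqxx ?e12 ?e21 ?q01 ?q02 ?q03 ?q10 ?q12 ?q13 ?q20 ?q21 ?q23 ?q30 ?q31 ?q32;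
  cbv beta iota delta [negb andb orb].
Ltac evq := repeat progress evq1.
Ltac rtab := repeat progress (rewrite ?R10 ?R11 ?R12 ?R13 ?R20 ?R21 ?R22 ?R23 ?sum2; evq).
Ltac fin := f2ring.
Ltac cI i := case: (ord2 i) => ->.
Ltac cX x := case: (ptcases x) => [->|[->|[->|->]]].
Ltac fe3 := let i := fresh "i" in let j := fresh "j" in let x := fresh "x" in
  apply: functional_extensionality => i; apply: functional_extensionality => j;
  apply: functional_extensionality => x; unf; rtab; cI i; cI j; cX x; rtab; fin.
Lemma nabla_mk nabla sigma : is_bimod_conn nabla sigma -> nabla = mk_nabla (fun b => nabla (e b)).
Proof.
case=> H1 [H2 _]; apply: functional_extensionality => w.
have Hw : w = add1 (lmul1 (w i1) (e i1)) (lmul1 (w i2) (e i2)).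
  apply: functional_extensionality => i; apply: functional_extensionality => x.
  unf; cI i; evq; fin.
rewrite {1}Hw H1 !H2; fe3.
Qed.

Lemma sigma_mk nabla sigma : is_bimod_conn nabla sigma ->
  sigma = mk_sigma (fun a b => sigma (E a b)).
Proof.
case=> _ [_ [_ [H4 [H5 _]]]]; apply: functional_extensionality => T.
have HT : T = add2 (add2 (lmul2 (T i1 i1) (E i1 i1)) (lmul2 (T i1 i2) (E i1 i2)))
                   (add2 (lmul2 (T i2 i1) (E i2 i1)) (lmul2 (T i2 i2) (E i2 i2))).
  apply: functional_extensionality => i; apply: functional_extensionality => j;
  apply: functional_extensionality => x.
  unf; cI i; cI j; evq; fin.
rewrite {1}HT !H4 !H5; fe3.
Qed.

Lemma bimod_Sof N : is_bimod_conn (mk_nabla N) (mk_sigma (Sof N)).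
Proof.
split; [|split; [|split; [|split; [|split]]]].
- move=> w w'; fe3.
- move=> f w; fe3.
- move=> f w; fe3.
- move=> T T'; fe3.
- move=> f T; fe3.
- move=> f T; fe3.
Qed.

Definition symN (N : 'I_2 -> Om2) := forall b x, N b i1 i2 x = N b i2 i1 x.

Lemma tors_of N : torsion_free (mk_nabla N) -> symN N.
Proof.
move=> Ht b x; move: (equal_f (Ht (e b)) x).
unf; rtab; cI b; cX x; rtab; move=> H; apply: (use_eq H); fin.
Qed.

Lemma tors_mk N : symN N -> torsion_free (mk_nabla N).
Proof.
move=> Hs w; apply: functional_extensionality => x.
unf; rtab; cX x; rtab; rewrite ?Hs; fin.
Qed.
Fixpoint monB (l : seq bool) (m : seq nat) : bool :=
  match m with [::] => true | v :: m' => nth false l v && monB l m' end.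
Fixpoint polB (l : seq bool) (p : seq (seq nat)) : bool :=
  match p with [::] => false | m :: p' => xorb (monB l m) (polB l p') end.
Local Close Scope ring_scope.
Definition eqs : seq (seq (seq nat)) := [::
  [:: [:: 14; 17]; [:: 16]; [:: 16; 22]; [:: 22]];
  [:: [:: 8; 9]; [:: 10]; [:: 10; 11]; [:: 11]];
  [:: [:: 1; 2]; [:: 10]; [:: 10; 11]; [:: 11]];
  [:: [:: 5; 23]; [:: 16]; [:: 16; 22]; [:: 22]];
  [:: [:: 0]; [:: 0; 16]; [:: 17]; [:: 17; 20]];
  [:: [:: 9]; [:: 9; 21]; [:: 11; 18]; [:: 18]];
  [:: [:: 1]; [:: 1; 12]; [:: 6]; [:: 6; 10]];
  [:: [:: 3]; [:: 3; 22]; [:: 7; 23]; [:: 23]];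
  [:: [:: 0; 3]; [:: 3]; [:: 8; 9]; [:: 9]];
  [:: [:: 6]; [:: 6; 18]; [:: 14; 17]; [:: 17]];
  [:: [:: 5; 23]; [:: 6; 18]; [:: 18]; [:: 23]];
  [:: [:: 0]; [:: 0; 3]; [:: 1]; [:: 1; 2]];
  [:: [:: 3; 15]; [:: 8]; [:: 8; 14]; [:: 14]];
  [:: [:: 6; 13]; [:: 8]; [:: 8; 14]; [:: 14]];
  [:: [:: 2]; [:: 2; 5]; [:: 5]; [:: 18; 19]];
  [:: [:: 0; 4]; [:: 2]; [:: 2; 5]; [:: 5]];
  [:: [:: 0]; [:: 0; 3]; [:: 3]; [:: 8; 9]];
  [:: [:: 6]; [:: 6; 18]; [:: 14; 17]; [:: 18]];
  [:: [:: 5; 23]; [:: 6]; [:: 6; 18]; [:: 18]];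
  [:: [:: 0]; [:: 0; 3]; [:: 1; 2]; [:: 3]];
  [:: [:: 3; 15]; [:: 8]; [:: 8; 14]; [:: 15]];
  [:: [:: 6; 13]; [:: 8; 14]; [:: 13]; [:: 14]];
  [:: [:: 2; 5]; [:: 5]; [:: 18; 19]; [:: 19]];
  [:: [:: 0; 4]; [:: 2]; [:: 2; 5]; [:: 4]];
  [:: [:: 4]; [:: 4; 22]; [:: 14]; [:: 14; 21]];
  [:: [:: 8]; [:: 8; 20]; [:: 10; 19]; [:: 19]];
  [:: [:: 2]; [:: 2; 7]; [:: 11; 13]; [:: 13]];
  [:: [:: 5]; [:: 5; 12]; [:: 15]; [:: 15; 16]];
  [:: [:: 0; 4]; [:: 20]; [:: 20; 21]; [:: 21]];
  [:: [:: 18; 19]; [:: 20]; [:: 20; 21]; [:: 21]];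
  [:: [:: 6; 13]; [:: 7]; [:: 7; 12]; [:: 12]];
  [:: [:: 3; 15]; [:: 7]; [:: 7; 12]; [:: 12]]].
Definition sols : seq (seq bool) := [::
  [:: false; false; false; false; false; false; false; false; false; false; false; false; false; false; false; false; false; false; false; false; false; false; false; false];
  [:: true; true; true; true; true; true; true; true; true; true; true; true; true; true; true; true; true; true; true; true; true; true; true; true];
  [:: true; true; true; true; true; true; true; false; true; true; true; false; true; true; true; true; true; true; true; true; true; false; false; true];
  [:: true; true; true; true; true; true; true; true; true; true; false; true; false; true; true; true; false; true; true; true; false; true; true; true]].
Definition atoms (N : 'I_2 -> Om2) : seq F := [:: N i1 i1 i2 p3; N i2 i1 i1 p2; N i2 i1 i2 p3; N i1 i1 i2 p0; N i1 i2 i2 p0; N i2 i1 i2 p2; N i1 i1 i2 p1; N i2 i2 i2 p2; N i2 i1 i2 p0; N i2 i1 i1 p1; N i1 i1 i1 p2; N i1 i1 i1 p1; N i2 i2 i2 p3; N i1 i2 i2 p2; N i2 i1 i2 p1; N i1 i2 i2 p3; N i1 i1 i1 p0; N i2 i1 i1 p0; N i1 i1 i2 p2; N i1 i2 i2 p1; N i2 i2 i2 p1; N i2 i2 i2 p0; N i1 i1 i1 p3; N i2 i1 i1 p3].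
Local Open Scope ring_scope.
Definition complete (k : nat) (p : seq (seq nat)) := all (all (fun v => (v < k)%N)) p.
Fixpoint dfs (fuel : nat) (l : seq bool) : bool :=
  if has (fun p => complete (size l) p && polB l p) eqs then true
  else match fuel with 0 => l \in sols | fuel'.+1 => dfs fuel' (rcons l true) && dfs fuel' (rcons l false) end.
Lemma dfs_true : dfs 24 [::]. Proof. by vm_compute. Qed.

Lemma monB_cat l l' m : all (fun v => (v < size l)%N) m -> monB (l ++ l') m = monB l m.
Proof. elim: m => //= v m IH /andP[Hv Hm]; by rewrite nth_cat Hv IH. Qed.
Lemma polB_cat l l' p : complete (size l) p -> polB (l ++ l') p = polB l p.
Proof. elim: p => //= m p IH /andP[Hm Hp]; by rewrite monB_cat // IH. Qed.

Definition viol (l : seq bool) := has (fun p => complete (size l) p && polB l p) eqs.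
Lemma dfs0 l : dfs 0 l = if viol l then true else l \in sols. Proof. by []. Qed.
Lemma dfsS n l : dfs n.+1 l = if viol l then true else dfs n (rcons l true) && dfs n (rcons l false).
Proof. by []. Qed.
Lemma viol_ok l l' : viol l -> ~~ all (fun p => ~~ polB (l ++ l') p) eqs.
Proof.
move=> Hh; have [p Hp /andP[Hc Hb]] := seq.hasP Hh.
rewrite -has_predC; apply/seq.hasP; exists p => //=; by rewrite polB_cat // Hb.
Qed.
Lemma dfs_ok fuel l : dfs fuel l -> forall l', size l' = fuel ->
  all (fun p => ~~ polB (l ++ l') p) eqs -> (l ++ l') \in sols.
Proof.
elim: fuel l => [|n IH] l.
- rewrite dfs0; case: ifP => [Hh _ l' _ Ha|_ Hin [|//] _].
  + by move: (@viol_ok l l' Hh); rewrite Ha.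
  + by rewrite cats0.
- rewrite dfsS; case: ifP => [Hh _ l' _ Ha|_ /andP[H1 H2] [//|b l'] /= [Hs]].
  + by move: (@viol_ok l l' Hh); rewrite Ha.
  + rewrite -cat_rcons; case: b; [exact: IH H1 _ Hs | exact: IH H2 _ Hs].
Qed.

Lemma refl_sols l : size l = 24 -> all (fun p => ~~ polB l p) eqs -> l \in sols.
Proof. move=> Hs Ha; exact: (@dfs_ok 24 [::] dfs_true l Hs Ha). Qed.

Definition toB (L : seq F) : seq bool := map (fun v : F => v == 1) L.
Lemma nth_toB L v : nth false (toB L) v = (nth 0 L v == 1).
Proof. elim: L v => [|a L IH] [|v] //=. Qed.
Lemma bF (v : F) : (v == 1)%:R = v.
Proof. by case: (F2_cases v) => ->. Qed.
Lemma andF (a b : bool) : ((a && b)%:R : F) = a%:R * b%:R.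
Proof. by case: a; case: b; rewrite ?mul1r ?mul0r. Qed.
Lemma xorF (a b : bool) : ((xorb a b)%:R : F) = a%:R + b%:R.
Proof. by case: a; case: b; rewrite ?addr0 ?add0r ?two0. Qed.
Lemma evM_B L m : evM L m = (monB (toB L) m)%:R.
Proof. elim: m => [|v m IH] //=. by rewrite andF -IH nth_toB bF. Qed.
Lemma evP_B L p : evP L p = (polB (toB L) p)%:R.
Proof. elim: p => [|m p IH] //=. by rewrite xorF -IH evM_B. Qed.

Ltac via H := let T := type of H in lazymatch T with ?l = _ => transitivity l; [| exact H] end.
Ltac mfw Hs := unf; rtab; let H := fresh "H" in move=> H; via H;
  unfold atoms, eqs; cbn [evP evM nth]; rewrite ?Hs; fin.
Ltac mbw Hs := unfold atoms, eqs; cbn [evP evM nth]; let H := fresh "H" in move=> H;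
  unf; rtab; via H; rewrite ?Hs; fin.

Lemma metric_fw N : symN N -> metric_compat (mk_nabla N) (mk_sigma (Sof N)) gmet ->
  forall n, (n < 32)%N -> evP (atoms N) (nth [::] eqs n) = 0.
Proof.
move=> Hs HM n.
case: n => [_|n]; first by move: (HM i1 i1 i1 p0); mfw Hs.
case: n => [_|n]; first by move: (HM i1 i1 i1 p1); mfw Hs.
case: n => [_|n]; first by move: (HM i1 i1 i1 p2); mfw Hs.
case: n => [_|n]; first by move: (HM i1 i1 i1 p3); mfw Hs.
case: n => [_|n]; first by move: (HM i1 i1 i2 p0); mfw Hs.
case: n => [_|n]; first by move: (HM i1 i1 i2 p1); mfw Hs.
case: n => [_|n]; first by move: (HM i1 i1 i2 p2); mfw Hs.
case: n => [_|n]; first by move: (HM i1 i1 i2 p3); mfw Hs.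
case: n => [_|n]; first by move: (HM i1 i2 i1 p0); mfw Hs.
case: n => [_|n]; first by move: (HM i1 i2 i1 p1); mfw Hs.
case: n => [_|n]; first by move: (HM i1 i2 i1 p2); mfw Hs.
case: n => [_|n]; first by move: (HM i1 i2 i1 p3); mfw Hs.
case: n => [_|n]; first by move: (HM i1 i2 i2 p0); mfw Hs.
case: n => [_|n]; first by move: (HM i1 i2 i2 p1); mfw Hs.
case: n => [_|n]; first by move: (HM i1 i2 i2 p2); mfw Hs.
case: n => [_|n]; first by move: (HM i1 i2 i2 p3); mfw Hs.
case: n => [_|n]; first by move: (HM i2 i1 i1 p0); mfw Hs.
case: n => [_|n]; first by move: (HM i2 i1 i1 p1); mfw Hs.
case: n => [_|n]; first by move: (HM i2 i1 i1 p2); mfw Hs.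
case: n => [_|n]; first by move: (HM i2 i1 i1 p3); mfw Hs.
case: n => [_|n]; first by move: (HM i2 i1 i2 p0); mfw Hs.
case: n => [_|n]; first by move: (HM i2 i1 i2 p1); mfw Hs.
case: n => [_|n]; first by move: (HM i2 i1 i2 p2); mfw Hs.
case: n => [_|n]; first by move: (HM i2 i1 i2 p3); mfw Hs.
case: n => [_|n]; first by move: (HM i2 i2 i1 p0); mfw Hs.
case: n => [_|n]; first by move: (HM i2 i2 i1 p1); mfw Hs.
case: n => [_|n]; first by move: (HM i2 i2 i1 p2); mfw Hs.
case: n => [_|n]; first by move: (HM i2 i2 i1 p3); mfw Hs.
case: n => [_|n]; first by move: (HM i2 i2 i2 p0); mfw Hs.
case: n => [_|n]; first by move: (HM i2 i2 i2 p1); mfw Hs.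
case: n => [_|n]; first by move: (HM i2 i2 i2 p2); mfw Hs.
case: n => [_|n]; first by move: (HM i2 i2 i2 p3); mfw Hs.
done.
Qed.

Lemma metric_bw N : symN N -> (forall n, (n < 32)%N -> evP (atoms N) (nth [::] eqs n) = 0) ->
  metric_compat (mk_nabla N) (mk_sigma (Sof N)) gmet.
Proof.
move=> Hs HE i j k x; cI i; cI j; cI k; cX x.
- by move: (HE 0%N isT); mbw Hs.
- by move: (HE 1%N isT); mbw Hs.
- by move: (HE 2%N isT); mbw Hs.
- by move: (HE 3%N isT); mbw Hs.
- by move: (HE 4%N isT); mbw Hs.
- by move: (HE 5%N isT); mbw Hs.
- by move: (HE 6%N isT); mbw Hs.
- by move: (HE 7%N isT); mbw Hs.
- by move: (HE 8%N isT); mbw Hs.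
- by move: (HE 9%N isT); mbw Hs.
- by move: (HE 10%N isT); mbw Hs.
- by move: (HE 11%N isT); mbw Hs.
- by move: (HE 12%N isT); mbw Hs.
- by move: (HE 13%N isT); mbw Hs.
- by move: (HE 14%N isT); mbw Hs.
- by move: (HE 15%N isT); mbw Hs.
- by move: (HE 16%N isT); mbw Hs.
- by move: (HE 17%N isT); mbw Hs.
- by move: (HE 18%N isT); mbw Hs.
- by move: (HE 19%N isT); mbw Hs.
- by move: (HE 20%N isT); mbw Hs.
- by move: (HE 21%N isT); mbw Hs.
- by move: (HE 22%N isT); mbw Hs.
- by move: (HE 23%N isT); mbw Hs.
- by move: (HE 24%N isT); mbw Hs.
- by move: (HE 25%N isT); mbw Hs.
- by move: (HE 26%N isT); mbw Hs.
- by move: (HE 27%N isT); mbw Hs.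
- by move: (HE 28%N isT); mbw Hs.
- by move: (HE 29%N isT); mbw Hs.
- by move: (HE 30%N isT); mbw Hs.
- by move: (HE 31%N isT); mbw Hs.
Qed.

Lemma bv (v : F) (c : bool) : (v == 1) = c -> v = c%:R.
Proof. by move<-; rewrite bF. Qed.

Lemma sols_of_eqs N : (forall n, (n < 32)%N -> evP (atoms N) (nth [::] eqs n) = 0) ->
  toB (atoms N) \in sols.
Proof.
move=> H; apply: refl_sols; first by [].
apply/allP => p Hp.
have Hn : (index p eqs < 32)%N by rewrite -[32%N]/(size eqs) index_mem.
move: (H _ Hn); rewrite nth_index // evP_B.
case: (polB _ _) => //; rewrite tR => /eqP; by rewrite oner_eq0.
Qed.

Lemma sols_ok : all (fun s => all (fun p => ~~ polB s p) eqs) sols.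
Proof. by vm_compute. Qed.

Lemma eqs_of_sols N : toB (atoms N) \in sols ->
  forall n, (n < 32)%N -> evP (atoms N) (nth [::] eqs n) = 0.
Proof.
move=> Hin n Hn; rewrite evP_B.
move/allP: sols_ok => /(_ _ Hin) /allP /(_ (nth [::] eqs n)).
rewrite mem_nth //; by move/(_ isT)/negbTE => ->.
Qed.

Lemma decode N : symN N -> toB (atoms N) \in sols ->
  [\/ N = Nc 0, N = Nc 1, N = Ng (gam 0) | N = Ng (gam 1)].
Proof.
move=> Hs; rewrite /sols !inE => /or4P [] /eqP; rewrite /atoms /toB; cbn [map] => Hl;
  [apply: Or41 | apply: Or42 | apply: Or43 | apply: Or44];
  case: Hl => *;
  repeat match goal with H : (?v == 1) = ?c |- _ => move/bv: H => H end;
  apply: functional_extensionality => b; apply: functional_extensionality => i;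
  apply: functional_extensionality => j; apply: functional_extensionality => x;
  cI b; cI i; cI j; cX x; rewrite -?Hs;
  repeat match goal with H : N _ _ _ _ = _ |- _ => rewrite ?H; clear H end;
  unf; evq; fin.
Qed.

Lemma symNc a : symN (Nc a). Proof. by []. Qed.
Lemma symNg g : symN (Ng g). Proof. move=> b x; unf; cI b; evq; fin. Qed.

Lemma Sof_Nc a : Sof (Nc a) = Sc a.
Proof.
apply: functional_extensionality => b; apply: functional_extensionality => c;
apply: functional_extensionality => i; apply: functional_extensionality => j;
apply: functional_extensionality => x.
unf; cI b; cI c; cI i; cI j; evq; fin.
Qed.

Lemma Sof_Ng g : Sof (Ng g) = Sg g.
Proof.
apply: functional_extensionality => b; apply: functional_extensionality => c;
apply: functional_extensionality => i; apply: functional_extensionality => j;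
apply: functional_extensionality => x.
unf; cI b; cI c; cI i; cI j; evq; fin.
Qed.

Lemma gam_alt c : alternating (gam c).
Proof. by split; unf; evq. Qed.

Lemma alt_gam g : alternating g -> g = gam (g p0).
Proof.
case=> H0 H1 H3; apply: functional_extensionality => x; cX x; unf; evq => //.
Qed.

Lemma qlc_N N : symN N -> toB (atoms N) \in sols -> QLC (mk_nabla N) (mk_sigma (Sof N)) gmet.
Proof. move=> Hs Hin; split; [exact: tors_mk | exact: metric_bw Hs (eqs_of_sols Hin)]. Qed.

Lemma flat_Nc a : flat (mk_nabla (Nc a)).
Proof. move=> w k x; unf; rtab; cI k; cX x; rtab; fin. Qed.

Lemma flat_gam c : flat (mk_nabla (Ng (gam c))).
Proof. move=> w k x; unf; rtab; cI k; cX x; rtab; fin. Qed.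
Lemma Sform N S : is_bimod_conn (mk_nabla N) (mk_sigma S) -> S = Sof N.
Proof.
case=> _ [_ [H3 _]].
apply: functional_extensionality => a; apply: functional_extensionality => b.
apply: functional_extensionality => i; apply: functional_extensionality => j;
apply: functional_extensionality => x.
move: (equal_f (equal_f (equal_f (H3 (dl x) (e a)) i) j) x).
move: (equal_f (equal_f (equal_f (H3 (dl (opp x)) (e a)) i) j) x).
cI a; cI b; cI i; cI j; cX x; rewrite ?opp0 ?opp1 ?opp2 ?opp3; unf; rtab; move=> E1 E2;
  rewrite ?tR ?fR in E1 E2 *; first [apply: (use_eq E2); fin | apply: (use_eq E1); fin].
Qed.

Lemma mk_nabla_e N b : mk_nabla N (e b) = N b.
Proof.
apply: functional_extensionality => i; apply: functional_extensionality => j;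
apply: functional_extensionality => x.
unf; rtab; cI b; cI i; cI j; cX x; rtab; fin.
Qed.

Lemma Nc_inj a c : mk_nabla (Nc a) = mk_nabla (Nc c) -> a = c.
Proof.
move/(congr1 (fun nb => nb (e i1) i1 i1 p0)); rewrite !mk_nabla_e; unf; by rewrite !mulr1.
Qed.

Lemma Ng_inj g g' : mk_nabla (Ng g) = mk_nabla (Ng g') -> g = g'.
Proof.
move=> H; apply: functional_extensionality => x.
move/(congr1 (fun nb => nb (e i1) i1 i1 x)): H; rewrite !mk_nabla_e; unf; evq.
by rewrite tR !mulr1 => /addrI.
Qed.

Lemma Nc_Ng a g : alternating g -> mk_nabla (Nc a) <> mk_nabla (Ng g).
Proof.
case=> H0 H1 H3 H.
have E1 := congr1 (fun nb => nb (e i1) i1 i1 p0) H.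
have E2 := congr1 (fun nb => nb (e i1) i1 i1 p1) H.
have E3 := congr1 (fun nb => nb (e i1) i1 i2 p0) H.
move: E1 E2 E3; rewrite !mk_nabla_e; unf; evq; rewrite H1 ?tR ?fR.
case: (F2_cases a) => ->; case: (F2_cases (g p0)) => -> /eqP E1 /eqP E2 /eqP E3;
  by move: E1 E2 E3; vm_compute.
Qed.

Lemma gam01 : gam 0 <> gam 1.
Proof. move/(congr1 (fun g => g p0)); unf; evq => /eqP; by vm_compute. Qed.

Lemma fam_c a : [/\ is_bimod_conn (mk_nabla (Nc a)) (mk_sigma (Sc a)),
         QLC (mk_nabla (Nc a)) (mk_sigma (Sc a)) gmet & flat (mk_nabla (Nc a))].
Proof.
rewrite -Sof_Nc; split; [exact: bimod_Sof | | exact: flat_Nc].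
apply: qlc_N; first exact: symNc.
by case: (F2_cases a) => ->; vm_compute.
Qed.

Lemma fam_g g : alternating g -> [/\ is_bimod_conn (mk_nabla (Ng g)) (mk_sigma (Sg g)),
         QLC (mk_nabla (Ng g)) (mk_sigma (Sg g)) gmet & flat (mk_nabla (Ng g))].
Proof.
move/alt_gam => ->; rewrite -Sof_Ng; split; [exact: bimod_Sof | | exact: flat_gam].
apply: qlc_N; first exact: symNg.
by case: (F2_cases (g p0)) => ->; vm_compute.
Qed.

Theorem proposition4p7 :
  (* the QLCs for g are exactly the listed ones *)
  (forall (nabla : Om1 -> Om2) (sigma : Om2 -> Om2),
     is_bimod_conn nabla sigma ->
     (QLC nabla sigma gmet <->
       ((exists alpha : F, nabla = mk_nabla (Nc alpha) /\ sigma = mk_sigma (Sc alpha)) \/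
        (exists gamma : A, alternating gamma /\
            nabla = mk_nabla (Ng gamma) /\ sigma = mk_sigma (Sg gamma))))) /\
  (* the listed ones are flat QLCs *)
  (forall alpha : F,
     [/\ is_bimod_conn (mk_nabla (Nc alpha)) (mk_sigma (Sc alpha)),
         QLC (mk_nabla (Nc alpha)) (mk_sigma (Sc alpha)) gmet &
         flat (mk_nabla (Nc alpha))]) /\
  (forall gamma : A, alternating gamma ->
     [/\ is_bimod_conn (mk_nabla (Ng gamma)) (mk_sigma (Sg gamma)),
         QLC (mk_nabla (Ng gamma)) (mk_sigma (Sg gamma)) gmet &
         flat (mk_nabla (Ng gamma))]) /\
  (* they are four distinct connections *)
  (forall alpha beta : F, mk_nabla (Nc alpha) = mk_nabla (Nc beta) -> alpha = beta) /\
  (forall gamma gamma' : A, alternating gamma -> alternating gamma' ->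
     mk_nabla (Ng gamma) = mk_nabla (Ng gamma') -> gamma = gamma') /\
  (forall (alpha : F) (gamma : A), alternating gamma ->
     mk_nabla (Nc alpha) <> mk_nabla (Ng gamma)) /\
  (exists gamma0 gamma1 : A, [/\ alternating gamma0, alternating gamma1, gamma0 <> gamma1 &
     forall gamma, alternating gamma -> gamma = gamma0 \/ gamma = gamma1]).
Proof.
split; [|split; [exact: fam_c|split; [exact: fam_g|split; [exact: Nc_inj|split;
  [move=> g g' _ _; exact: Ng_inj|split; [exact: Nc_Ng|]]]]]].
- move=> nabla sigma H; split.
  + move=> Q.
    have Hn := nabla_mk H; have Hsg := sigma_mk H.
    move: (fun b => nabla (e b)) Hn => N Hn.
    move: (fun a b => sigma (E a b)) Hsg => S Hsg.
    subst nabla sigma.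
    have HS := Sform H; subst S.
    case: Q => Ht Hm; have Hs := tors_of Ht.
    have Hin := sols_of_eqs (metric_fw Hs Hm).
    case: (decode Hs Hin) => ->.
    * by left; exists 0; rewrite Sof_Nc.
    * by left; exists 1; rewrite Sof_Nc.
    * by right; exists (gam 0); rewrite Sof_Ng; split => //; exact: gam_alt.
    * by right; exists (gam 1); rewrite Sof_Ng; split => //; exact: gam_alt.
  + case=> [[a [-> ->]] | [g [Ha [-> ->]]]].
    * by case: (fam_c a).
    * by case: (fam_g Ha).
- exists (gam 0), (gam 1); split; [exact: gam_alt | exact: gam_alt | exact: gam01 |].
  move=> g /alt_gam ->; case: (F2_cases (g p0)) => ->; [left|right] => //.
Qed.
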